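(* Let $N\in\mathbb N$. The ring $R_J(N)$ contains: (1) the Laurent polynomials $\mathbb C[\zeta^{1/N},\zeta^{-1/N},q^{1/N},q^{-1/N}]$; (2) the Fourier expansions of weakly holomorphic Jacobi forms of level $N$ (of any weight $k$ and index $m\ge0$); (3) every infinite product of the form $\prod_{j=1}^\infty\bigl(1+q^{j/N}h_j(q^{1/N},\zeta^{1/N})\bigr)$, where each $h_j\in\mathbb C[q,\zeta,\zeta^{-1}]$ is either zero or a polynomial, and there is $D>0$ with $\deg_\zeta h_j\le D$ for all $j$, where $\deg_\zeta h_j=\max\{|r|:\ \zeta^r \text{ occurs in } h_j \text{ with nonzero coefficient}\}$.
   Context: $R(N)=\mathbb C[\zeta^{1/N},\zeta^{-1/N}]((q^{1/N}))$ is the ring of formal series $f=\sum_{n,r\in\frac1N\mathbb Z}c(n,r)q^n\zeta^r$ such that for each $n$ only finitely many $r$ have $c(n,r)\ne0$ and $n$ is bounded below on $\operatorname{supp}(f)=\{(n,r): c(n,r)\neq0\}$. $R_J(N)$ is the set of $f\in R(N)$ for which there exist $a>0$, $b,c\in\mathbb R$ with $\operatorname{supp}(f)\subseteq\{(n,r): n\ge ar^2+br+c\}$. Here $q=e^{2\pi i\tau}$, $\zeta=e^{2\pi i z}$ for $(\tau,z)\in\mathcal H_1\times\mathbb C$. Let $P_{2,1}(\mathbb Z)$ be the subgroup of $\operatorname{Sp}_2(\mathbb Z)$ of matrices whose entries in positions (1,2), (3,2), (4,1), (4,2), (4,3) vanish, and $\Gamma_2(N)=\{\sigma\in\operatorname{Sp}_2(\mathbb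 Z):\sigma\equiv I_4 \bmod N\}$. For $m\in\mathbb Q_{\ge0}$ and $2k\in\mathbb Z$, a weakly holomorphic Jacobi form of weight $k$, index $m$ and level $N$ is a holomorphic $\phi:\mathcal H_1\times\mathbb C\to\mathbb C$ such that $\tilde\phi\begin{pmatrix}\tau&z\\ z&\omega\end{pmatrix}=\phi(\tau,z)e^{2\pi i m\omega}$ satisfies $\det(C\Omega+D)^{-k}\tilde\phi(\sigma\langle\Omega\rangle)=\chi(\sigma)\tilde\phi(\Omega)$ for all $\sigma=\begin{pmatrix}A&B\\C&D\end{pmatrix}\in P_{2,1}(\mathbb Z)\cap\Gamma_2(N)$ (for a fixed multiplier $\chi$ of finite order), whose Fourier expansion $\sum c(n,r)q^n\zeta^r$ has $n,r\in\frac1N\mathbb Z$ with $n$ bounded below on the support (and similarly at each cusp). *)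

(* Defs.v *)
From HB Require Import structures.
From mathcomp Require Import all_boot all_order all_algebra.
From mathcomp Require Import all_classical all_reals all_analysis.
From mathcomp Require Import complex Rstruct Rstruct_topology.
Import numFieldNormedType.Exports numFieldTopology.Exports.
Import Order.TTheory GRing.Theory Num.Theory ComplexField.

Set Implicit Arguments.
Unset Strict Implicit.
Unset Printing Implicit Defensive.

Local Open Scope ring_scope.
Local Open Scope classical_set_scope.
Local Open Scope complex_scope.

Notation Rr := Rdefinitions.R.
Notation C := (Rdefinitions.R[i]).

(* We store the coefficient of q^(a/N) zeta^(b/N) as  f a b  (a,b:int) *)
Definition fser := int -> int -> C.

Definition in_R (N : nat) (f : fser) : Prop :=
  (forall a : int, finite_set [set b : int | f a b != 0]) /\
  (exists a0 : int, forall a b : int, f a b != 0 -> a0 <= a).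

Definition in_RJ (N : nat) (f : fser) : Prop :=
  in_R N f /\
  exists alpha beta gamma : Rr, 0 < alpha /\
    forall a b : int, f a b != 0 ->
      alpha * (b%:~R / N%:R) ^+ 2 + beta * (b%:~R / N%:R) + gamma
        <= a%:~R / N%:R.

Definition laurent_poly (f : fser) : Prop :=
  finite_set [set p : int * int | f p.1 p.2 != 0].

Definition cexp (w : C) : C :=
  (expR (complex.Re w) * cos (complex.Im w)) +i* (expR (complex.Re w) * sin (complex.Im w)).

Definition ee (x : C) : C := cexp (2%:R * (pi : Rr)%:C * 'i * x).

(* unconditional (summable-family) convergence of a family indexed by Z^2:
   the net of finite partial sums converges to v. *)
Definition has_sum2 (u : int * int -> C) (v : C) : Prop :=
  forall eps : Rr, 0 < eps -> exists F0 : seq (int * int),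
    forall F : seq (int * int), uniq F -> {subset F0 <= F} ->
      `| \sum_(p <- F) u p - v | < eps%:C.

(* holomorphic on H_1 x C: jointly continuous and complex differentiable
   in each variable separately (Osgood). *)
Definition holo_HxC (phi : C -> C -> C) : Prop :=
  forall tau z : C, 0 < complex.Im tau ->
    {for (tau, z), continuous ((fun p : C * C => phi p.1 p.2) : C^o * C^o -> C^o)} /\
    derivable ((fun t : C => phi t z) : C^o -> C^o) tau 1 /\
    derivable ((fun w : C => phi tau w) : C^o -> C^o) z 1.

Definition fourier_exp (M : nat) (psi : C -> C -> C) (c : fser) : Prop :=
  forall tau z : C, 0 < complex.Im tau ->
    has_sum2 (fun p : int * int =>
                c p.1 p.2 * ee ((p.1%:~R * tau + p.2%:~R * z) / M%:R))
             (psi tau z).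

Definition bounded_below_n (c : fser) : Prop :=
  exists a0 : int, forall a b : int, c a b != 0 -> a0 <= a.

(* Weight convention: the weight k with 2k in Z is encoded by k2 = 2k : int,
   and w^(-k) := (sqrtC w)^(-k2) (the library's square root branch; for
   integral k this is exactly w^(-k)). *)
Definition autpow (k2 : int) (w : C) : C := (sqrtC w) ^ (- k2).

Definition H2 (Om : 'M[C]_2) : Prop :=
  Om^T = Om /\
  forall v : 'rV[Rr]_2, v != 0 ->
    0 < (v *m map_mx (@complex.Im Rr) Om *m v^T) ord0 ord0.

Definition Jmx : 'M[int]_(2 + 2) := block_mx 0 1%:M (- 1%:M) 0.

Definition Sp2Z (s : 'M[int]_(2 + 2)) : Prop := s^T *m Jmx *m s = Jmx.

(* entries (1,2),(3,2),(4,1),(4,2),(4,3) (1-indexed) vanish *)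
Definition P21 (s : 'M[int]_(2 + 2)) : Prop :=
  s (inord 0) (inord 1) = 0 /\ s (inord 2) (inord 1) = 0 /\
  s (inord 3) (inord 0) = 0 /\ s (inord 3) (inord 1) = 0 /\
  s (inord 3) (inord 2) = 0.

Definition Gamma2 (N : nat) (s : 'M[int]_(2 + 2)) : Prop :=
  forall i j : 'I_(2 + 2), (N%:Z %| s i j - (i == j)%:Z)%Z.

Definition blkA (s : 'M[int]_(2 + 2)) : 'M[C]_2 := map_mx intr (ulsubmx s).
Definition blkB (s : 'M[int]_(2 + 2)) : 'M[C]_2 := map_mx intr (ursubmx s).
Definition blkC (s : 'M[int]_(2 + 2)) : 'M[C]_2 := map_mx intr (dlsubmx s).
Definition blkD (s : 'M[int]_(2 + 2)) : 'M[C]_2 := map_mx intr (drsubmx s).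

Definition sp_act (s : 'M[int]_(2 + 2)) (Om : 'M[C]_2) : 'M[C]_2 :=
  (blkA s *m Om + blkB s) *m invmx (blkC s *m Om + blkD s).

Definition sp_j (s : 'M[int]_(2 + 2)) (Om : 'M[C]_2) : C :=
  \det (blkC s *m Om + blkD s).

Definition phi_tilde (m : rat) (phi : C -> C -> C) (Om : 'M[C]_2) : C :=
  phi (Om ord0 ord0) (Om ord0 (inord 1)) * ee (ratr m * Om (inord 1) (inord 1)).

Definition slash (k2 : int) (m : rat) (phi : C -> C -> C) (a b c d : int)
  (tau z : C) : C :=
  let j := c%:~R * tau + d%:~R in
  autpow k2 j * ee (- (ratr m * c%:~R * z ^+ 2) / j)
    * phi ((a%:~R * tau + b%:~R) / j) (z / j).

Definition jacobi_form (N : nat) (k2 : int) (m : rat)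
  (chi : 'M[int]_(2 + 2) -> C) (phi : C -> C -> C) : Prop :=
  0 <= m /\
  (exists M : nat, (0 < M)%N /\ forall s, chi s ^+ M = 1) /\
  holo_HxC phi /\
  (forall s : 'M[int]_(2 + 2), Sp2Z s -> P21 s -> Gamma2 N s ->
     forall Om : 'M[C]_2, H2 Om ->
       autpow k2 (sp_j s Om) * phi_tilde m phi (sp_act s Om)
         = chi s * phi_tilde m phi Om) /\
  (exists c : fser, fourier_exp N phi c /\ bounded_below_n c) /\
  (forall a b c d : int, a * d - b * c = 1 ->
     exists M : nat, (0 < M)%N /\
       exists cf : fser, fourier_exp M (slash k2 m phi a b c d) cf /\
                         bounded_below_n cf).

Definition fmul (f g : fser) : fser := fun a b =>
  (\sum_(p \in [set: int * int]) f p.1 p.2 * g (a - p.1) (b - p.2))%R.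

Definition fone : fser := fun a b => ((a == 0) && (b == 0))%:R.

(* h j i r = coefficient of q^i zeta^r in h_j in C[q, zeta, zeta^-1] *)
Definition hseq := nat -> nat -> int -> C.

(* the j-th factor 1 + q^(j/N) h_j(q^(1/N), zeta^(1/N)) *)
Definition hfactor (h : hseq) (j : nat) : fser := fun a b =>
  fone a b + (if (j%:Z <= a) then h j `|a - j%:Z|%N b else 0).

Fixpoint pprod (h : hseq) (J : nat) : fser :=
  match J with
  | 0 => fone
  | J'.+1 => fmul (pprod h J') (hfactor h J'.+1)
  end.

Definition is_infprod (h : hseq) (P : fser) : Prop :=
  forall a b : int, exists J0 : nat, forall J : nat, (J0 <= J)%N ->
    P a b = pprod h J a b.

Definition admissible (h : hseq) : Prop :=
  (forall j : nat, (0 < j)%N ->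
     finite_set [set p : nat * int | h j p.1 p.2 != 0]) /\
  exists D : Rr, 0 < D /\
    forall (j i : nat) (r : int), (0 < j)%N -> h j i r != 0 -> `|r|%:~R <= D.

(* Main.v *)
Require Import Defs.
From HB Require Import structures.
From mathcomp Require Import all_boot all_order all_algebra.
From mathcomp Require Import all_classical all_reals all_analysis.
From mathcomp Require Import complex Rstruct Rstruct_topology.
Import numFieldNormedType.Exports numFieldTopology.Exports.
Import Order.TTheory GRing.Theory Num.Theory ComplexField.
From mathcomp Require Import lra ring zify.
Local Open Scope ring_scope.

Section Helpers.
Local Open Scope complex_scope.

Lemma cexpD (x y : C) : cexp (x + y) = cexp x * cexp y.
Proof.
case: x => a b; case: y => c d; rewrite /cexp.
rewrite [complex.Re _]/= [complex.Im (_ + _)]/= exp.expRD trigo.cosD trigo.sinD.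
apply/eqP; rewrite eq_complex /=; apply/andP; split; apply/eqP; ring.
Qed.

Lemma eeD (x y : C) : ee (x + y) = ee x * ee y.
Proof. by rewrite /ee mulrDr cexpD. Qed.

Lemma ee_form (a b : Rr) : ee (a +i* b) = (expR (- (2 * pi * b)) * cos (2 * pi * a)) +i* (expR (- (2 * pi * b)) * sin (2 * pi * a)).
Proof.
rewrite /ee /cexp. congr (_ +i* _); congr (_ * _); try congr (_ _); rewrite /=; ring.
Qed.

Lemma trig_per_nat (x : Rr) (n : nat) :
  cos (x + 2 * pi * n%:R) = cos x /\ sin (x + 2 * pi * n%:R) = sin x.
Proof.
elim: n => [|n [IHc IHs]]; first by rewrite mulr0 addr0.
have -> : x + 2 * pi * n.+1%:R = (x + 2 * pi * n%:R) + pi *+ 2.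
  by rewrite mulrS; ring.
by rewrite trigo.cosD2pi trigo.sinD2pi.
Qed.

Lemma trig_per (x : Rr) (k : int) :
  cos (x + 2 * pi * k%:~R) = cos x /\ sin (x + 2 * pi * k%:~R) = sin x.
Proof.
case: k => n; first by rewrite -pmulrn; apply: trig_per_nat.
have [c s] := trig_per_nat (x + 2 * pi * (Negz n)%:~R) n.+1.
have e : x + 2 * pi * (Negz n)%:~R + 2 * pi * n.+1%:R = x.
  by rewrite NegzE mulrNz; ring.
by rewrite e in c s; split.
Qed.

Lemma ee0 : ee 0 = 1.
Proof.
rewrite -[0 : C]/(0 +i* 0) ee_form !mulr0 oppr0 exp.expR0 trigo.cos0 trigo.sin0 !mulr1 mulr0.
by [].
Qed.

Lemma ee_neq0 x : ee x != 0.
Proof.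
apply/negP => /eqP h.
have := eeD x (- x); rewrite subrr ee0 h mul0r => /eqP; by rewrite oner_eq0.
Qed.

Lemma intC (k : int) : (k%:~R : C) = (k%:~R : Rr) +i* 0.
Proof. by rewrite complexr0 rmorph_int. Qed.

Lemma ee_int (k : int) : ee k%:~R = 1.
Proof.
rewrite intC ee_form !mulr0 oppr0 exp.expR0 !mul1r.
have [c s] := trig_per 0 k. rewrite !add0r in c s.
by rewrite c s trigo.cos0 trigo.sin0.
Qed.

Lemma ee_muln x (j : nat) : ee (x *+ j) = ee x ^+ j.
Proof.
elim: j => [|j IH]; first by rewrite mulr0n ee0 expr0.
by rewrite mulrS eeD IH exprS.
Qed.

Lemma realC_div (a b : Rr) : ((a / b)%:C : C) = a%:C / b%:C.
Proof. by rewrite fmorph_div. Qed.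

Lemma cos_eq1_02pi (t : Rr) : 0 < t < pi *+ 2 -> cos t != 1.
Proof.
move=> /andP [t0 t2]; apply/negP => /eqP ct.
have pi0 := trigo.pi_gt0 Rr.
have [tp | pt] := leP t pi.
  have : t = 0.
    apply: trigo.cos_inj; rewrite ?in_itv /= ?ct ?trigo.cos0 //.
    - by rewrite (ltW t0) tp.
    - by rewrite lexx ltW.
  by move=> e; rewrite e ltxx in t0.
have : pi *+ 2 - t = 0.
  apply: trigo.cos_inj; rewrite ?in_itv /= ?trigo.cos0 //.
  - apply/andP; split; rewrite mulr2n; lra.
  - by rewrite lexx ltW.
  - by rewrite trigo.cosB trigo.cos2pi trigo.sin2pi ct; ring.
move=> e. lra.
Qed.

Lemma ee_eq1 (k : int) (M : nat) : (0 < M)%N ->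
  ee (k%:~R / M%:R) = 1 -> (M%:Z %| k)%Z.
Proof.
move=> M0 h.
have Mz : M%:Z != 0 by rewrite eqz_nat -lt0n.
apply/dvdz_mod0P/eqP/negP => r0.
have r0' : 0 <= (k %% M%:Z)%Z by apply: modz_ge0.
have rM : (k %% M%:Z)%Z < M%:Z by apply: ltz_pmod; rewrite ltz_nat.
move: (divz_eq k M%:Z) r0 r0' rM h.
move: (k %% M%:Z)%Z (k %/ M%:Z)%Z => r q -> r0 r0' rM h.
have MC : (M%:R : C) != 0 by rewrite pnatr_eq0 -lt0n.
have e1 : ((q * M%:Z + r)%:~R / M%:R : C) = (q%:~R : C) + (r%:~R / M%:R : C).
  by rewrite intrD intrM mulrDl -mulrA pmulrn mulfV // mulr1.
have e2 : (r%:~R / M%:R : C) = (r%:~R / M%:R : Rr) +i* 0.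
  by rewrite complexr0 fmorph_div rmorph_int rmorph_nat.
rewrite e1 e2 eeD ee_int mul1r ee_form mulr0 oppr0 exp.expR0 !mul1r in h.
case: h => hc _.
have Mr : (0 : Rr) < M%:R by rewrite ltr0n.
have rr : (0 : Rr) < r%:~R by rewrite ltr0z lt_neqAle r0' andbT eq_sym; apply/negP.
have rM' : (r%:~R : Rr) < M%:R by move: rM; rewrite -(ltr_int Rr) pmulrn.
suff : 0 < 2 * pi * (r%:~R / (M%:R : Rr)) < pi *+ 2.
  by move/cos_eq1_02pi; rewrite hc eqxx.
have pi0 := trigo.pi_gt0 Rr.
have x0 : 0 < r%:~R / (M%:R : Rr) by apply: divr_gt0.
have x1 : r%:~R / (M%:R : Rr) < 1 by rewrite ltr_pdivrMr // mul1r.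
apply/andP; split; first by apply: mulr_gt0 => //; apply: mulr_gt0.
rewrite mulr2n; nra.
Qed.

Lemma ee_rootsum (k : int) (M : nat) : (0 < M)%N ->
  \sum_(j < M) ee (k%:~R * j%:R / M%:R) = if (M%:Z %| k)%Z then M%:R else 0.
Proof.
move=> M0.
have MC : (M%:R : C) != 0 by rewrite pnatr_eq0 -lt0n.
set w := ee (k%:~R / M%:R).
have ej : forall j : nat, ee (k%:~R * j%:R / M%:R) = w ^+ j.
  by move=> j; rewrite /w -ee_muln mulrAC mulr_natr.
rewrite (eq_bigr (fun j : 'I_M => w ^+ j)); last by move=> j _; rewrite ej.
case: ifP => hd.
  have w1 : w = 1.
    case/dvdzP: hd => q hq; rewrite /w hq intrM pmulrn -mulrA mulfV // mulr1 ee_int //.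
  by rewrite w1 (eq_bigr (fun _ => 1)) ?sumr_const ?card_ord // => j _; rewrite expr1n.
have wM : w ^+ M = 1.
  by rewrite /w -ee_muln -[_ *+ M]mulr_natr divfK // ee_int.
have w1 : w - 1 != 0.
  rewrite subr_eq0; apply/negP => /eqP h; move: hd; by rewrite (ee_eq1 _ _ M0 h).
have := subrX1 w M; rewrite wM subrr => /esym/eqP; rewrite mulf_eq0 (negbTE w1) /=.
by move/eqP.
Qed.

Lemma has_sum2_ext u v x : (forall p, u p = v p) -> has_sum2 u x -> has_sum2 v x.
Proof. by move=> e; have -> : u = v by apply: funext. Qed.

Lemma has_sum2_0 : has_sum2 (fun _ => 0) 0.
Proof.
move=> eps e0; exists [::] => F _ _; rewrite big1 // subrr normr0 ltcR //.
Qed.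

Lemma has_sum2_add u v x y : has_sum2 u x -> has_sum2 v y ->
  has_sum2 (fun p => u p + v p) (x + y).
Proof.
move=> hu hv eps e0.
have e2 : 0 < eps / 2 by rewrite divr_gt0.
have [F1 h1] := hu _ e2; have [F2 h2] := hv _ e2.
exists (F1 ++ F2) => F uF sF.
have s1 : {subset F1 <= F} by move=> p hp; apply: sF; rewrite mem_cat hp.
have s2 : {subset F2 <= F} by move=> p hp; apply: sF; rewrite mem_cat hp orbT.
rewrite big_split /=.
have -> : \sum_(i <- F) u i + \sum_(i <- F) v i - (x + y) = (\sum_(i <- F) u i - x) + (\sum_(i <- F) v i - y) by ring.
have -> : eps%:C = (eps / 2)%:C + (eps / 2)%:C by rewrite -rmorphD /=; congr (_%:C); field.
apply: le_lt_trans (ler_normD _ _) _.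
by apply: ltrD; [apply: h1 | apply: h2].
Qed.

Lemma normC_re (k : C) : `|k| = (complex.Re `|k|)%:C.
Proof. by rewrite normc_def. Qed.

Lemma has_sum2_scale u x (k : C) : has_sum2 u x ->
  has_sum2 (fun p => k * u p) (k * x).
Proof.
move=> hu eps e0.
set r := complex.Re `|k|.
have r0 : 0 <= r by rewrite -ler0c -normC_re.
have e1 : 0 < eps / (r + 1) by rewrite divr_gt0 // ltr_wpDl.
have [F0 h0] := hu _ e1.
exists F0 => F uF sF.
rewrite -mulr_sumr -mulrBr normrM normC_re.
apply: (le_lt_trans (y := r%:C * (eps / (r + 1))%:C)).
  by apply: ler_wpM2l; [rewrite ler0c | apply: ltW; apply: h0].
rewrite -rmorphM ltcR /=.
rewrite mulrA ltr_pdivrMr ?ltr_wpDl //; nra.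
Qed.

Lemma has_sum2_sum (I : Type) (r : seq I) (U : I -> int * int -> C) (X : I -> C) :
  (forall j, has_sum2 (U j) (X j)) ->
  has_sum2 (fun p => \sum_(j <- r) U j p) (\sum_(j <- r) X j).
Proof.
move=> h; elim: r => [|j r IH].
  by apply: (has_sum2_ext (fun _ => 0)) => [p|]; rewrite ?big_nil //; apply: has_sum2_0.
rewrite big_cons; apply: (has_sum2_ext (fun p => U j p + \sum_(j <- r) U j p)).
  by move=> p; rewrite big_cons.
exact: has_sum2_add.
Qed.

Lemma has_sum2_cauchy v x : has_sum2 v x -> forall eps, 0 < eps ->
  exists F0 : seq (int * int), forall G, uniq G -> (forall p, p \in G -> p \notin F0) ->
    `| \sum_(p <- G) v p | < eps%:C + eps%:C.
Proof.
move=> hv eps e0; have [F0 h0] := hv _ e0.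
exists F0 => G uG dG.
have u1 : uniq (undup F0) := undup_uniq F0.
have s1 : {subset F0 <= undup F0} by move=> p; rewrite mem_undup.
have u2 : uniq (undup F0 ++ G).
  rewrite cat_uniq u1 uG andbT /=; apply/hasPn => p /dG; by rewrite mem_undup.
have s2 : {subset F0 <= undup F0 ++ G} by move=> p hp; rewrite mem_cat mem_undup hp.
have := h0 _ u2 s2; have := h0 _ u1 s1.
rewrite big_cat /= => a b.
have -> : \sum_(p <- G) v p = (\sum_(i <- undup F0) v i + \sum_(i <- G) v i - x) - (\sum_(i <- undup F0) v i - x) by ring.
apply: le_lt_trans (ler_normB _ _) _; rewrite addrC; exact: ltrD.
Qed.

Lemma has_sum2_reindex u x (g gi : int * int -> int * int) :
  cancel g gi -> cancel gi g -> has_sum2 u x -> has_sum2 (fun p => u (g p)) x.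
Proof.
move=> gK giK hu eps e0; have [F0 h0] := hu _ e0.
exists (map gi F0) => F uF sF.
rewrite -(big_map g predT u); apply: h0.
  by rewrite map_inj_uniq //; apply: can_inj gK.
move=> p hp; have : gi p \in F by apply: sF; apply: map_f.
by move=> h; rewrite -[p]giK; apply: map_f.
Qed.

Lemma norm_small_eq0 (w : C) : (forall eps : Rr, 0 < eps -> `|w| < (eps + eps + eps)%:C) -> w = 0.
Proof.
move=> h; apply/eqP; apply: contraT => w0.
have e := normC_re w; move: e; set r := complex.Re `|w| => e.
have r0 : 0 < r.
  by move: (normr_gt0 w); rewrite w0 e ltcE => /andP [_].
have := h (r / 3) (divr_gt0 r0 (ltr0n _ 3)).
rewrite e ltcR.
have -> : r / 3 + r / 3 + r / 3 = r by field.
by rewrite ltxx.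
Qed.

Lemma elem_le_sumn (T : eqType) (s : seq T) (f : T -> nat) x : x \in s -> (f x <= \sum_(y <- s) f y)%N.
Proof.
elim: s => [|y s IH] //; rewrite in_cons big_cons => /orP [/eqP -> | h].
  exact: leq_addr.
by apply: leq_trans (IH h) _; apply: leq_addl.
Qed.

Lemma dvdz_absz_ge (M : nat) (k : int) : (M%:Z %| k)%Z -> k != 0 -> (M <= `|k|)%N.
Proof.
move=> hd k0; apply: dvdn_leq; first by rewrite absz_gt0.
by move: hd; rewrite /dvdz.
Qed.

Definition fterm (d : fser) (N : nat) (tau z : C) (p : int * int) : C :=
  d p.1 p.2 * ee ((p.1%:~R * tau + p.2%:~R * z) / N%:R).

Lemma fourier_zero (N : nat) (d : fser) : (0 < N)%N ->
  (forall tau z : C, 0 < complex.Im tau -> has_sum2 (fterm d N tau z) 0) ->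
  forall a b, d a b = 0.
Proof.
move=> N0 hd a0 b0.
have NC : (N%:R : C) != 0 by rewrite pnatr_eq0 -lt0n.
set tau0 : C := 'i.
set v := fterm d N tau0 0.
suff : v (a0, b0) = 0.
  rewrite /v /fterm /= => /eqP; rewrite mulf_eq0 (negbTE (ee_neq0 _)) orbF.
  by move/eqP.
apply: norm_small_eq0 => eps e0.
have [F0v hF0v] := has_sum2_cauchy _ _ (hd tau0 0 ltr01) _ e0.
set R := \sum_(p <- F0v) (`|p.1 - a0|%N + `|p.2 - b0|%N)%N.
set M := R.+1.
have M0 : (0 < M)%N by [].
have MC : (M%:R : C) != 0 by rewrite pnatr_eq0.
set cl := fun p : int * int => (M%:Z %| p.1 - a0)%Z && (M%:Z %| p.2 - b0)%Z.
set sh := fun j : nat => ((N%:R * j%:R / M%:R : Rr))%:C.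
set U := fun (j : 'I_M * 'I_M) (p : int * int) =>
   (ee ((- a0)%:~R * j.1%:R / M%:R) * ee ((- b0)%:~R * j.2%:R / M%:R)) *
   fterm d N (tau0 + sh j.1) (0 + sh j.2) p.
have hU : forall j, has_sum2 (U j) ((ee ((- a0)%:~R * j.1%:R / M%:R) * ee ((- b0)%:~R * j.2%:R / M%:R)) * 0).
  move=> j; apply: has_sum2_scale; apply: hd.
  by rewrite /tau0 /sh /= addr0 ltr01.
have hu := has_sum2_sum _ (index_enum _) _ _ hU.
rewrite big1 in hu; last by move=> j _; rewrite mulr0.
have shC : forall j : nat, sh j = N%:R * j%:R / M%:R.
  by move=> j; rewrite /sh fmorph_div rmorphM /= !rmorph_nat.
have eU : forall p, \sum_(j <- index_enum _) U j p = (M%:R * M%:R) * (if cl p then v p else 0).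
  move=> p.
  have -> : \sum_(j <- index_enum _) U j p = \sum_(i < M) \sum_(j < M) U (i, j) p.
    by rewrite pair_bigA; apply: eq_bigr => [[i j]] _.
  have eij : forall (i j : 'I_M), U (i, j) p = v p * (ee ((p.1 - a0)%:~R * i%:R / M%:R) * ee ((p.2 - b0)%:~R * j%:R / M%:R)).
    move=> i j; rewrite /U /v /fterm /= !shC.
    have -> : ee ((p.1%:~R * (tau0 + N%:R * i%:R / M%:R) + p.2%:~R * (0 + N%:R * j%:R / M%:R)) / N%:R)
       = ee ((p.1%:~R * tau0 + p.2%:~R * 0) / N%:R) * ee (p.1%:~R * i%:R / M%:R) * ee (p.2%:~R * j%:R / M%:R).
      by rewrite -!eeD; congr ee; field; rewrite MC NC.
    have -> : ee ((p.1 - a0)%:~R * i%:R / M%:R) = ee (p.1%:~R * i%:R / M%:R) * ee ((- a0)%:~R * i%:R / M%:R).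
      by rewrite -eeD; congr ee; rewrite intrB intrN; field.
    have -> : ee ((p.2 - b0)%:~R * j%:R / M%:R) = ee (p.2%:~R * j%:R / M%:R) * ee ((- b0)%:~R * j%:R / M%:R).
      by rewrite -eeD; congr ee; rewrite intrB intrN; field.
    ring.
  rewrite (eq_bigr (fun i : 'I_M => v p * ee ((p.1 - a0)%:~R * i%:R / M%:R) * \sum_(j < M) ee ((p.2 - b0)%:~R * j%:R / M%:R))); last first.
    by move=> i _; rewrite mulr_sumr; apply: eq_bigr => j _; rewrite eij mulrA.
  rewrite -mulr_suml -mulr_sumr !ee_rootsum // /cl.
  by case: ifP; case: ifP => /=; rewrite ?mulr0 ?mul0r //; move=> *; ring.
have hu' := has_sum2_ext _ _ _ eU hu.
have Mpos : (0:Rr) < M%:R * M%:R by rewrite mulr_gt0 // ltr0n.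
have [F0u hF0u] := hu' (eps * (M%:R * M%:R)) (mulr_gt0 e0 Mpos).
set p0 := (a0, b0).
set F := undup (p0 :: F0u).
have uF : uniq F by apply: undup_uniq.
have sF : {subset F0u <= F} by move=> p hp; rewrite mem_undup in_cons hp orbT.
have p0F : p0 \in F by rewrite mem_undup in_cons eqxx.
have clp0 : cl p0 by rewrite /cl /= !subrr !dvdz0.
have h1 := hF0u F uF sF; rewrite subr0 in h1.
set G := seq.filter (fun p => p != p0) (seq.filter cl F).
have eF : \sum_(p <- F) (M%:R * M%:R) * (if cl p then v p else 0) = (M%:R * M%:R) * (v p0 + \sum_(p <- G) v p).
  rewrite -mulr_sumr -big_mkcond -big_filter (bigD1_seq p0) ?filter_uniq ?mem_filter ?clp0 //.
  by rewrite big_filter.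
rewrite eF normrM ger0_norm ?mulr_ge0 ?ler0n // in h1.
have h2 : `|v p0 + \sum_(p <- G) v p| < eps%:C.
  rewrite rmorphM /= rmorphM /= !rmorph_nat [X in _ < X]mulrC ltr_pM2l // in h1.
  by rewrite mulr_gt0 // ltr0n.
have hG : forall p, p \in G -> p \notin F0v.
  move=> [p1 p2]; rewrite /G !mem_filter => /and3P [np0 clp _].
  apply/negP => inF.
  have := elem_le_sumn _ F0v (fun p : int * int => (`|p.1 - a0|%N + `|p.2 - b0|%N)%N) _ inF.
  rewrite -/R /= => hR.
  move: clp; rewrite /cl /= => /andP [d1 d2].
  have [e1|n1] := eqVneq (p1 - a0) 0.
    have [e2|n2] := eqVneq (p2 - b0) 0.
      move: np0; rewrite /p0; apply/negP; rewrite negbK.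
      by apply/eqP; congr (_, _); apply/eqP; rewrite -subr_eq0 ?e1 ?e2.
    have := dvdz_absz_ge _ _ d2 n2; rewrite /M => h.
    by move: (leq_trans h (leq_trans (leq_addl _ _) hR)); rewrite ltnn.
  have := dvdz_absz_ge _ _ d1 n1; rewrite /M => h.
  by move: (leq_trans h (leq_trans (leq_addr _ _) hR)); rewrite ltnn.
have h3 := hF0v G (filter_uniq _ (filter_uniq _ uF)) hG.
have -> : v p0 = (v p0 + \sum_(p <- G) v p) - \sum_(p <- G) v p by ring.
apply: le_lt_trans (ler_normB _ _) _.
rewrite !rmorphD /= -addrA; exact: ltrD.
Qed.

Definition Amx (l : int) : 'M[int]_2 :=
  \matrix_(i < 2, j < 2) (if (i == j :> nat) then 1 else if ((i == 1%N :> nat) && (j == 0%N :> nat)) then l else 0).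
Definition Dmx (l : int) : 'M[int]_2 :=
  \matrix_(i < 2, j < 2) (if (i == j :> nat) then 1 else if ((i == 0%N :> nat) && (j == 1%N :> nat)) then - l else 0).
Definition heis (l : int) : 'M[int]_(2 + 2) := block_mx (Amx l) 0 0 (Dmx l).

Lemma AtD (l : int) : (Amx l)^T *m Dmx l = 1%:M.
Proof.
apply/matrixP => i j; rewrite !mxE !big_ord_recl big_ord0 /= !mxE /=.
case: i => [[|[|i]]] Hi; case: j => [[|[|j]]] Hj //=; rewrite /bump /=; try ring.
Qed.

Lemma DtA (l : int) : (Dmx l)^T *m Amx l = 1%:M.
Proof. by rewrite -[LHS]trmxK trmx_mul trmxK AtD trmx1. Qed.

Lemma heis_sp (l : int) : Sp2Z (heis l).
Proof.
rewrite /Sp2Z /heis /Jmx tr_block_mx !trmx0 !mulmx_block.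
rewrite ?mulmx0 ?mul0mx ?addr0 ?add0r ?mulmxN ?mulmx1 ?mulNmx ?mul0mx ?mulmx0 ?addr0 ?add0r ?oppr0.
rewrite ?mulmx0 ?mul0mx ?addr0 ?add0r ?mulmxN ?mulmx1 ?mulNmx ?mul0mx ?mulmx0 ?addr0 ?add0r ?oppr0.
by rewrite AtD DtA.
Qed.

Lemma ord4_ind (P : 'I_(2 + 2) -> Prop) :
  (forall k : 'I_2, P (lshift 2 k)) -> (forall k : 'I_2, P (rshift 2 k)) -> forall i, P i.
Proof.
move=> hl hr i; case: (splitP i) => k e.
  by have -> : i = lshift 2 k by apply: val_inj.
by have -> : i = rshift 2 k by apply: val_inj.
Qed.

Lemma inordL (k : nat) : (k < 2)%N -> (inord k : 'I_(2 + 2)) = lshift 2 (inord k).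
Proof. by move=> hk; apply: val_inj; rewrite /= !inordK // (leq_trans hk). Qed.

Lemma inordR (k : nat) : (k < 2)%N -> (inord (2 + k) : 'I_(2 + 2)) = rshift 2 (inord k).
Proof. by move=> hk; apply: val_inj; rewrite /= !inordK. Qed.

Lemma heis_P21 (l : int) : P21 (heis l).
Proof.
rewrite /P21 /heis.
rewrite (inordL 0 erefl) (inordL 1 erefl) (inordR 0 erefl) (inordR 1 erefl).
rewrite ?block_mxEul ?block_mxEur ?block_mxEdl ?block_mxEdr !mxE /= ?inordK //.
Qed.

Lemma heis_G (N : nat) (l : int) : (N%:Z %| l)%Z -> Gamma2 N (heis l).
Proof.
move=> hl; rewrite /Gamma2 /heis.
apply: ord4_ind => k1; apply: ord4_ind => k2;
  rewrite ?block_mxEul ?block_mxEur ?block_mxEdl ?block_mxEdr ?mxE -val_eqE /=;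
  case: k1 => [[|[|k1]]] H1 //; case: k2 => [[|[|k2]]] H2 //=;
  rewrite ?subrr ?sub0r ?subr0 ?dvdz0 ?dvdzN //.
all: by rewrite rpredN.
Qed.

Definition Om (tau z w : C) : 'M[C]_2 :=
  \matrix_(i < 2, j < 2) (if (i == 0%N :> nat) && (j == 0%N :> nat) then tau
                          else if (i == 1%N :> nat) && (j == 1%N :> nat) then w else z).

Lemma DDinv (l : int) : Dmx l *m Dmx (- l) = 1%:M.
Proof.
apply/matrixP => i j; rewrite !mxE !big_ord_recl big_ord0 /= !mxE /=.
case: i => [[|[|i]]] Hi; case: j => [[|[|j]]] Hj //=; rewrite /bump /=; try ring.
Qed.

Lemma invD (l : int) : invmx (map_mx (intr : int -> C) (Dmx l)) = map_mx intr (Dmx (- l)).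
Proof.
have h : map_mx (intr : int -> C) (Dmx l) *m map_mx intr (Dmx (- l)) = 1%:M.
  by rewrite -map_mxM DDinv map_mx1.
have [u _] := mulmx1_unit h.
by rewrite -[LHS]mulmx1 -h mulmxA mulVmx // mul1mx.
Qed.

Lemma sp_act_heis (l : int) (tau z w : C) :
  sp_act (heis l) (Om tau z w) =
  map_mx intr (Amx l) *m Om tau z w *m map_mx intr (Dmx (- l)).
Proof.
rewrite /sp_act /blkA /blkB /blkC /blkD /heis block_mxKul block_mxKur block_mxKdl block_mxKdr.
by rewrite !map_mx0 mul0mx add0r addr0 invD.
Qed.

Lemma sp_j_heis (l : int) (tau z w : C) : sp_j (heis l) (Om tau z w) = 1.
Proof.
rewrite /sp_j /blkC /blkD /heis block_mxKdl block_mxKdr map_mx0 mul0mx add0r.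
rewrite det_map_mx -det_tr det_trig.
  by rewrite !big_ord_recl big_ord0 !mxE /= mulr1.
apply/is_trig_mxP => i j; rewrite !mxE; case: i => [[|[|i]]] Hi; case: j => [[|[|j]]] Hj //.
Qed.

Lemma heis_entries (l : int) (tau z w : C) :
  let X := sp_act (heis l) (Om tau z w) in
  [/\ X ord0 ord0 = tau, X ord0 (inord 1) = z + l%:~R * tau &
      X (inord 1) (inord 1) = l%:~R * (l%:~R * tau + z) + l%:~R * z + w].
Proof.
rewrite /= sp_act_heis; split; rewrite !mxE !big_ord_recl !big_ord0 !mxE /= ?inordK //=;
  rewrite !big_ord_recl !big_ord0 !mxE /= ?inordK //=; ring.
Qed.

Lemma Om_entries (tau z w : C) :
  [/\ Om tau z w ord0 ord0 = tau, Om tau z w ord0 (inord 1) = z & Om tau z w (inord 1) (inord 1) = w].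
Proof. by split; rewrite !mxE /= ?inordK. Qed.

Lemma H2_Om (tau z : C) : 0 < complex.Im tau ->
  H2 (Om tau z (0 +i* ((complex.Im z) ^+ 2 / complex.Im tau + 1))).
Proof.
move=> T0; split.
  by apply/matrixP => i j; rewrite !mxE; case: i => [[|[|i]]] Hi; case: j => [[|[|j]]] Hj.
move=> v v0.
rewrite !mxE !big_ord_recl !big_ord0 !mxE /= !big_ord_recl !big_ord0 !mxE /=.
set T := complex.Im tau; set Y := complex.Im z.
set a := v ord0 ord0; set b := v ord0 (lift ord0 ord0).
have ab : (a != 0) || (b != 0).
  apply: contraT; rewrite negb_or !negbK => /andP [/eqP a0 /eqP b0].
  suff : v = 0 by move=> e; rewrite e eqxx in v0.
  apply/matrixP => i j.
  rewrite (ord1 i) mxE; case: j => [[|[|j]]] Hj //.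
    by rewrite -a0 /a; congr (v _ _); apply: val_inj.
  by rewrite -b0 /b; congr (v _ _); apply: val_inj.
have TQ : T * ((a * T + b * Y) * a + (a * Y + b * (Y ^+ 2 / T + 1)) * b) = (T * a + Y * b) ^+ 2 + T * b ^+ 2.
  by field; rewrite gt_eqF.
rewrite !addr0 -(pmulr_rgt0 _ T0) TQ.
have [b0|b0] := eqVneq b 0.
  rewrite b0 in ab TQ *; rewrite /= in ab.
  have -> : (T * a + Y * 0) ^+ 2 + T * 0 ^+ 2 = (T * a) ^+ 2 by ring.
  rewrite eqxx orbF in ab.
  by rewrite exprn_even_gt0 //= mulf_neq0 // lt0r_neq0.
apply: ltr_pwDr; first by rewrite mulr_gt0 // exprn_even_gt0.
exact: sqr_ge0.
Qed.

Lemma jacobi_heis N k2 m chi phi (l : int) : jacobi_form N k2 m chi phi -> (N%:Z %| l)%Z ->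
  forall tau z : C, 0 < complex.Im tau ->
  phi tau (z + l%:~R * tau) * ee (ratr m * (l%:~R * (l%:~R * tau + z) + l%:~R * z))
   = chi (heis l) * phi tau z.
Proof.
move=> [_ [_ [_ [law _]]]] hl tau z T0.
set w : C := 0 +i* ((complex.Im z) ^+ 2 / complex.Im tau + 1).
have := law (heis l) (heis_sp l) (heis_P21 l) (heis_G _ _ hl) (Om tau z w) (H2_Om _ z T0).
rewrite sp_j_heis /autpow sqrtC1 exp1rz mul1r /phi_tilde.
have [-> -> ->] := heis_entries l tau z w.
have [-> -> ->] := Om_entries tau z w.
rewrite mulrDr eeD mulrA mulrA => /mulIf; apply; exact: ee_neq0.
Qed.

Lemma finite_ball (K : nat) : finite_set [set b : int | (`|b| <= K)%N].
Proof.
apply: (sub_finite_set (B := (fun i : 'I_(K + K).+1 => i%:Z - K%:Z) @` setT)); last first.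
  by apply: finite_image; apply: finite_finset.
move=> b /= hb.
have hi : (`|(b + K%:Z)%R| < (K + K).+1)%N by lia.
exists (Ordinal hi) => //=.
lia.
Qed.

Lemma in_RJ_bound (N : nat) (f : fser) (dd e g a0 : int) : (0 < N)%N -> 0 < dd -> 0 < e ->
  (forall a b, f a b != 0 -> a0 <= a /\ dd * b ^+ 2 <= e * a + g) -> in_RJ N f.
Proof.
move=> N0 d0 e0 H.
split; first split.
- move=> a; apply: (sub_finite_set _ (finite_ball `|(e * a + g)%R|)).
  move=> b /= hb; have [_ h] := H a b hb.
  rewrite expr2 in h; nia.
- by exists a0 => a b /H [].
exists (dd%:~R * N%:R / e%:~R), 0, (- (g%:~R / (e%:~R * N%:R))).
have Nr : (0 : Rr) < N%:R by rewrite ltr0n.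
have er : (0 : Rr) < e%:~R by rewrite ltr0z.
have dr : (0 : Rr) < dd%:~R by rewrite ltr0z.
split; first by rewrite !mulr_gt0 // invr_gt0.
move=> a b /H [_ h].
have h' : dd%:~R * (b%:~R : Rr) ^+ 2 <= e%:~R * a%:~R + g%:~R.
  by move: h; rewrite expr2 -(ler_int Rr) intrD !intrM -expr2.
have -> : dd%:~R * N%:R / e%:~R * ((b%:~R : Rr) / N%:R) ^+ 2 + 0 * (b%:~R / N%:R) - g%:~R / (e%:~R * N%:R)
   = (dd%:~R * (b%:~R : Rr) ^+ 2 - g%:~R) / (e%:~R * N%:R).
  by field; rewrite !gt_eqF.
rewrite ler_pdivrMr ?mulr_gt0 //.
have -> : a%:~R / N%:R * (e%:~R * N%:R) = (e%:~R * a%:~R : Rr) by field; rewrite gt_eqF.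
lra.
Qed.

Lemma fourier_unique (N : nat) f g c1 c2 : (0 < N)%N ->
  fourier_exp N f c1 -> fourier_exp N g c2 ->
  (forall tau z, 0 < complex.Im tau -> f tau z = g tau z) ->
  forall a b, c1 a b = c2 a b.
Proof.
move=> N0 h1 h2 e a b; apply/eqP; rewrite -subr_eq0; apply/eqP.
apply: (fourier_zero N (fun a b => c1 a b - c2 a b) N0) => tau z T0.
have := has_sum2_add _ _ _ _ (h1 tau z T0) (has_sum2_scale _ _ (-1) (h2 tau z T0)).
rewrite e // mulN1r subrr; apply: has_sum2_ext => p; rewrite /fterm /=; ring.
Qed.

Lemma part2_key (N : nat) k2 m chi phi (c : fser) (a0 : int) : (0 < N)%N ->
  jacobi_form N k2 m chi phi -> fourier_exp N phi c ->
  (forall a b, c a b != 0 -> a0 <= a) ->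
  forall (t a b : int), c a b != 0 ->
    a0 <= a + b * (t * 2 * denq m * N%:Z) + 4 * N%:Z ^+ 3 * numq m * denq m * t ^+ 2.
Proof.
move=> N0 J hc hb t a b cab.
have NC : (N%:R : C) != 0 by rewrite pnatr_eq0 -lt0n.
have dC : ((denq m)%:~R : C) != 0 by rewrite intr_eq0 denq_neq0.
set l := t * 2 * denq m * N%:Z.
have hl : (N%:Z %| l)%Z by apply: dvdz_mull; apply: dvdzz.
set K1 := 4 * N%:Z ^+ 3 * numq m * denq m * t ^+ 2.
set K2 := 4 * N%:Z ^+ 2 * numq m * t.
pose g := fun p : int * int => (p.1 + p.2 * l + K1, p.2 + K2).
pose gi := fun p : int * int => (p.1 - (p.2 - K2) * l - K1, p.2 - K2).
have gK : cancel g gi by case=> x y; rewrite /g /gi /=; congr (_, _); ring.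
have giK : cancel gi g by case=> x y; rewrite /g /gi /=; congr (_, _); ring.
set E := fun tau z : C => ee (ratr m * (l%:~R * (l%:~R * tau + z) + l%:~R * z)).
have Eid : forall (tau z : C) (p : int * int),
    E tau z * ee ((p.1%:~R * tau + p.2%:~R * (z + l%:~R * tau)) / N%:R)
    = ee (((g p).1%:~R * tau + (g p).2%:~R * z) / N%:R).
  move=> tau z [x y]; rewrite /E -eeD /g /=; congr ee.
  rewrite /ratr /l /K1 /K2 !intrD !intrM.
  have i2 : ((2%Z : int)%:~R : C) = 2%:R by [].
  have i4 : ((4%Z : int)%:~R : C) = 4%:R by [].
  have iN : ((N%:Z : int)%:~R : C) = N%:R by [].
  rewrite i2 i4 iN.
  field; by rewrite NC dC.
have hpsi : fourier_exp N (fun tau z => phi tau (z + l%:~R * tau) * E tau z)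
                         (fun x y => c (gi (x, y)).1 (gi (x, y)).2).
  move=> tau z T0.
  have h := hc tau (z + l%:~R * tau) T0.
  have hs := has_sum2_scale _ _ (E tau z) h.
  have hr := has_sum2_reindex _ _ gi g giK gK hs.
  rewrite [X in has_sum2 _ X]mulrC; apply: (has_sum2_ext _ _ _ _ hr) => -[x y] /=.
  by rewrite mulrCA (Eid tau z (gi (x, y))) giK.
have hchi : fourier_exp N (fun tau z => chi (heis l) * phi tau z) (fun x y => chi (heis l) * c x y).
  move=> tau z T0; apply: (has_sum2_ext _ _ _ _ (has_sum2_scale _ _ (chi (heis l)) (hc tau z T0))).
  by move=> p; rewrite /= mulrA.
have eqc := fourier_unique _ _ _ _ _ N0 hpsi hchi (fun tau z T0 => jacobi_heis _ _ _ _ _ _ J hl tau z T0).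
have := eqc (g (a, b)).1 (g (a, b)).2; rewrite -surjective_pairing gK /= => e.
have chi0 : chi (heis l) != 0.
  case: J => _ [[M [M0 hM]] _]; apply/negP => /eqP h0.
  by move: (hM (heis l)); rewrite h0 expr0n -(prednK M0) /= => /eqP; rewrite eq_sym oner_eq0.
have : c (g (a, b)).1 (g (a, b)).2 != 0.
  by apply: contra cab; rewrite e => /eqP ->; rewrite mulr0.
by move/hb.
Qed.

Lemma part2 (N : nat) k2 m chi phi : (0 < N)%N -> jacobi_form N k2 m chi phi ->
  forall c : fser, fourier_exp N phi c -> in_RJ N c.
Proof.
move=> N0 J c hc.
have [m0 [_ [_ [_ [[c0 [hc0 [a0 ha0]]] _]]]]] := J.
have cc0 := fourier_unique _ _ _ _ _ N0 hc hc0 (fun _ _ _ => erefl).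
have hb : forall a b, c a b != 0 -> a0 <= a by move=> a b; rewrite cc0 => /ha0.
have key := part2_key _ _ _ _ _ _ _ N0 J hc hb.
have d0 : 0 < denq m := denq_gt0 m.
have n0 : 0 <= numq m by rewrite numq_ge0.
have N0z : 0 < N%:Z by rewrite ltz_nat.
move: key d0 n0; set n := numq m; set d := denq m => key d0 n0.
case: (eqVneq n 0) => [n_0 | nn0].
  apply: (in_RJ_bound N c 1 1 (- a0) a0 N0 ltr01 ltr01) => a b cab.
  have ha := hb a b cab.
  split => //.
  have b0 : b = 0.
    apply/eqP; apply: contraT => bn.
    have := key (- b * (a - a0 + 1)) a b cab; rewrite n_0.
    have e : a + b * (- b * (a - a0 + 1) * 2 * d * N%:Z) + 4 * N%:Z ^+ 3 * 0 * d * (- b * (a - a0 + 1)) ^+ 2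
       = a - (b * b) * (2 * d * N%:Z) * (a - a0 + 1) by ring.
    rewrite e => h.
    have X1 : 1 <= b * b by nia.
    have Y1 : 1 <= 2 * d * N%:Z by nia.
    have XY : 1 <= (b * b) * (2 * d * N%:Z) by nia.
    nia.
  rewrite b0; lia.
have n0' : 0 < n by rewrite lt_neqAle eq_sym nn0 n0.
set Q := 4 * N%:Z ^+ 2 * n.
have Q0 : 0 < Q by rewrite /Q !mulr_gt0 // exprn_gt0.
apply: (in_RJ_bound N c d (4 * N%:Z * n) (- (4 * N%:Z * n * a0) + d * Q ^+ 2) a0 N0 d0 _) => [|a b cab].
  by rewrite !mulr_gt0.
have ha := hb a b cab.
split => //.
have := key (- (b %/ Q)%Z) a b cab.
move: (divz_eq b Q) (modz_ge0 b (lt0r_neq0 Q0)) (ltz_pmod b Q0).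
move: (b %/ Q)%Z (b %% Q)%Z => s r hbq r0 rQ h.
have P : 0 <= 4 * N%:Z * n * (a + b * (- s * 2 * d * N%:Z) + 4 * N%:Z ^+ 3 * n * d * (- s) ^+ 2 - a0).
  by apply: mulr_ge0; [rewrite !mulr_ge0 // ltW | rewrite subr_ge0].
have I : 4 * N%:Z * n * (a + b * (- s * 2 * d * N%:Z) + 4 * N%:Z ^+ 3 * n * d * (- s) ^+ 2 - a0)
   = 4 * N%:Z * n * (a - a0) - d * (b ^+ 2 - r ^+ 2).
  by rewrite hbq /Q; ring.
have rr : r ^+ 2 <= Q ^+ 2 by rewrite ler_pXn2r // ?nnegrE // ltW.
have dr : d * r ^+ 2 <= d * Q ^+ 2 by rewrite ler_wpM2l // ltW.
rewrite I in P.
lia.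
Qed.

Local Open Scope classical_set_scope.

Lemma fmul_supp (f g : fser) a b : fmul f g a b != 0 ->
  exists p : int * int, f p.1 p.2 != 0 /\ g (a - p.1) (b - p.2) != 0.
Proof.
move=> h; apply: contrapT => hn; move: h; apply/negP; rewrite negbK; apply/eqP.
rewrite /fmul fsbig1 // => p _.
apply/eqP; rewrite mulf_eq0; apply: contraT; rewrite negb_or => /andP [h1 h2].
by case: hn; exists p; split.
Qed.

Lemma fmul_single (f g : fser) a b :
  (forall p : int * int, p != (a, b) -> f p.1 p.2 * g (a - p.1) (b - p.2) = 0) ->
  fmul f g a b = f a b * g 0 0.
Proof.
move=> h; rewrite /fmul -(fsbig_widen [set (a, b)]) //.
  by rewrite fsbig_set1 /= !subrr.
move=> p [_ /= np]; apply: h; apply/eqP => e; exact: np.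
Qed.

Lemma hfactor_supp (h : hseq) (j : nat) (x y : int) (Dn : nat) :
  (forall i r, h j i r != 0 -> (`|r| <= Dn)%N) -> hfactor h j x y != 0 ->
  (x = 0 /\ y = 0) \/ (j%:Z <= x /\ (`|y| <= Dn)%N).
Proof.
move=> hD; rewrite /hfactor /fone /=; case: ifP => hj.
  case: (boolP ((x == 0) && (y == 0))) => [/andP [/eqP -> /eqP ->] | nxy] hh; first by left.
  move: hh; rewrite add0r => hh; right; split => //; exact: hD _ _ hh.
rewrite addr0; case: (boolP ((x == 0) && (y == 0))) => [/andP [/eqP -> /eqP ->] | nxy] hh; first by left.
by move: hh; rewrite eqxx.
Qed.

Lemma pprod_inv (h : hseq) (Dn : nat) : (1 <= Dn)%N ->
  (forall j i r, (0 < j)%N -> h j i r != 0 -> (`|r| <= Dn)%N) ->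
  forall J a b, pprod h J a b != 0 ->
    0 <= a /\ (`|b| <= Dn * J)%N /\ b ^+ 2 <= 2 * (Dn%:Z) ^+ 2 * a.
Proof.
move=> D1 hD; elim => [|J IH] a b /=.
  rewrite /fone; case: (boolP ((a == 0) && (b == 0))) => [/andP [/eqP -> /eqP ->] | nxy] hh.
    by split => //; rewrite expr0n /= mulr0.
  by move: hh; rewrite eqxx.
move/fmul_supp => [[p1 p2] [/= hp hf]].
have [p10 [p2b p2q]] := IH _ _ hp.
have := hfactor_supp _ _ _ _ Dn (fun i r => hD J.+1 i r (ltn0Sn J)) hf.
have eab : a = p1 + (a - p1) /\ b = p2 + (b - p2) by split; ring.
move: (a - p1) (b - p2) eab => x y [-> ->] [[-> ->] | [hx hy]].
  rewrite !addr0; split => //; split => //; apply: leq_trans p2b _; apply: leq_mul => //.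
rewrite expr2 in p2q *; rewrite !expr2.
split; first by lia.
split; first by rewrite mulnS; lia.
have hb1 : `|p2|%:Z <= Dn%:Z * J%:Z by lia.
have hy1 : `|y|%:Z <= Dn%:Z by lia.
have hpy : p2 * y <= `|p2|%:Z * `|y|%:Z.
  by nia.
have hy2 : y * y <= Dn%:Z * Dn%:Z by nia.
have hJ : (J.+1)%:Z <= x by [].
nia.
Qed.

Lemma pprod_stab (h : hseq) (Dn : nat) : (1 <= Dn)%N ->
  (forall j i r, (0 < j)%N -> h j i r != 0 -> (`|r| <= Dn)%N) ->
  forall J a b, a <= J%:Z -> pprod h J.+1 a b = pprod h J a b.
Proof.
move=> D1 hD J a b aJ.
rewrite [LHS]/= fmul_single.
  by rewrite /hfactor /fone /= addr0 mulr1.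
move=> [p1 p2] np /=.
case: (eqVneq (pprod h J p1 p2) 0) => [->|hp]; first by rewrite mul0r.
have [p10 _] := pprod_inv _ _ D1 hD _ _ _ hp.
apply/eqP; rewrite mulf_eq0; apply/orP; right.
rewrite /hfactor /fone /=.
have -> : (a - p1 == 0) && (b - p2 == 0) = false.
  apply/negP => /andP [/eqP e1 /eqP e2]; move/eqP: np; apply.
  have -> : p1 = a by apply/eqP; rewrite eq_sym -subr_eq0 e1.
  by have -> : p2 = b by apply/eqP; rewrite eq_sym -subr_eq0 e2.
have -> : (J.+1%:Z <= a - p1) = false by apply/negP => h'; lia.
by rewrite addr0.
Qed.

Lemma adm_bound (h : hseq) : admissible h ->
  exists Dn : nat, (1 <= Dn)%N /\ forall j i r, (0 < j)%N -> h j i r != 0 -> (`|r| <= Dn)%N.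
Proof.
move=> [_ [D [D0 hD]]].
exists (Num.bound D).+1; split => // j i r j0 hr.
have h1 := hD j i r j0 hr.
have h2 := archi_boundP (ltW D0).
have h3 : (`|r|%:~R : Rr) < ((Num.bound D)%:Z)%:~R by rewrite -pmulrn; apply: le_lt_trans h2.
rewrite ltr_int in h3.
lia.
Qed.

Lemma part3 (N : nat) (h : hseq) : (0 < N)%N -> admissible h ->
  (exists P : fser, is_infprod h P) /\ (forall P : fser, is_infprod h P -> in_RJ N P).
Proof.
move=> N0 /adm_bound [Dn [D1 hD]].
have stab : forall a b k, pprod h (absz a + k) a b = pprod h (absz a) a b.
  move=> a b; elim=> [|k IH]; first by rewrite addn0.
  by rewrite addnS (pprod_stab _ _ D1 hD) //; lia.
split.
  exists (fun a b => pprod h (absz a) a b) => a b; exists (absz a) => J hJ.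
  by rewrite -(subnKC hJ) stab.
move=> P hP.
apply: (in_RJ_bound N P 1 (2 * Dn%:Z ^+ 2) 0 0 N0 ltr01 _) => [|a b hab].
  by rewrite mulr_gt0 // exprn_gt0 // ltz_nat.
have [J0 hJ] := hP a b; rewrite (hJ J0 (leqnn _)) in hab.
have [a0 [_ hq]] := pprod_inv _ _ D1 hD _ _ _ hab.
by split => //; rewrite mul1r addr0.
Qed.

Lemma part1 (N : nat) (f : fser) : (0 < N)%N -> laurent_poly f -> in_RJ N f.
Proof.
move=> N0 /finite_seqP [s hs].
set M : nat := \sum_(p <- s) (`|p.1| + `|p.2|)%N.
have bound : forall a b, f a b != 0 -> (`|a| + `|b| <= M)%N.
  move=> a b hab.
  have : (a, b) \in s.
    have : [set p : int * int | f p.1 p.2 != 0] (a, b) by [].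
    by rewrite hs.
  by move/(elem_le_sumn _ s (fun p : int * int => (`|p.1| + `|p.2|)%N)).
apply: (in_RJ_bound N f 1 1 (M%:Z ^+ 2 + M%:Z) (- M%:Z) N0 ltr01 ltr01) => a b hab.
have := bound a b hab; rewrite !expr2 => hb.
split; nia.
Qed.

End Helpers.

Theorem lemma4p6 (N : nat) (HN : (0 < N)%N) :
  (forall f : fser, laurent_poly f -> in_RJ N f) /\
  (forall (k2 : int) (m : rat) (chi : 'M[int]_(2 + 2) -> C) (phi : C -> C -> C),
     jacobi_form N k2 m chi phi ->
     forall c : fser, fourier_exp N phi c -> in_RJ N c) /\
  (forall h : hseq, admissible h ->
     (exists P : fser, is_infprod h P) /\
     (forall P : fser, is_infprod h P -> in_RJ N P)).
Proof.
split; first by move=> f; apply: part1.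
split; first by move=> k2 m chi phi J c hc; apply: (part2 N k2 m chi phi HN J c hc).
by move=> h ha; apply: part3.
Qed.
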